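(* Let $X$ be a Banach lattice with order continuous norm, and let $S$ be a convex $C_0$-semigroup on $X$ with generator $A\colon D(A)\subset X\to X$. Then $A$ is closed: for every sequence $(x_n)_{n\in\mathbb N}$ in $D(A)$ with $x_n\to x\in X$ and $Ax_n\to y\in X$, it holds $x\in D(A)$ and $Ax=y$.
   Context: A Banach lattice $X$ has order continuous norm if $\|x_\alpha\|\to 0$ for every net $x_\alpha\downarrow 0$. An operator $T\colon X\to X$ is convex if $T(\lambda x+(1-\lambda)y)\le \lambda Tx+(1-\lambda)Ty$ for all $x,y$, $\lambda\in[0,1]$, and bounded if $\sup_{\|x\|\le r}\|Tx\|<\infty$ for all $r>0$. A convex $C_0$-semigroup is a family $(S(t))_{t\ge0}$ of bounded convex operators $X\to X$ with $S(0)=\mathrm{id}$, $S(t+s)=S(t)S(s)$ for all $s,t\ge0$, and $S(t)x\to x$ as $t\downarrow 0$ for all $x$. Its generator is $Ax:=\lim_{h\downarrow 0}\frac{S(h)x-x}{h}$ with domain $D(A)$ the set of $x$ for which this norm limit exists. *)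

(* Defs.v *)
From HB Require Import structures.
From mathcomp Require Import all_boot all_order all_algebra.
From mathcomp Require Import all_classical all_reals all_analysis.
Set Implicit Arguments. Unset Strict Implicit. Unset Printing Implicit Defensive.
Import Order.TTheory GRing.Theory Num.Theory.
Import numFieldNormedType.Exports.
Local Open Scope classical_set_scope.
Local Open Scope ring_scope.

Section Defs.
Context {R : realType} {V : completeNormedModType R}.

Definition lmod (join : V -> V -> V) (x : V) : V := join x (- x).

Record BanachLattice (le : V -> V -> Prop) (join : V -> V -> V) : Prop := {
  bl_refl : forall x, le x x;
  bl_antisym : forall x y, le x y -> le y x -> x = y;
  bl_trans : forall x y z, le x y -> le y z -> le x z;
  bl_add : forall x y z, le x y -> le (x + z) (y + z);
  bl_scale : forall (a : R) x y, 0 <= a -> le x y -> le (a *: x) (a *: y);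
  bl_join_l : forall x y, le x (join x y);
  bl_join_r : forall x y, le y (join x y);
  bl_join_least : forall x y z, le x z -> le y z -> le (join x y) z;
  bl_norm : forall x y, le (lmod join x) (lmod join y) -> `|x| <= `|y|
}.

(* Order continuous norm: ||x_a|| -> 0 for every net x_a decreasing to 0
   (i.e. decreasing with infimum 0). A net is indexed by a nonempty
   directed preordered set (I, r). *)
Definition order_continuous_norm (le : V -> V -> Prop) : Prop :=
  forall (I : Type) (r : I -> I -> Prop) (x : I -> V),
    inhabited I ->
    (forall i, r i i) ->
    (forall i j k, r i j -> r j k -> r i k) ->
    (forall i j, exists k, r i k /\ r j k) ->
    (forall i j, r i j -> le (x j) (x i)) ->
    (forall i, le 0 (x i)) ->
    (forall z, (forall i, le z (x i)) -> le z 0) ->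
    forall eps : R, 0 < eps ->
      exists i0, forall i, r i0 i -> `|x i| < eps.

Definition convex_op (le : V -> V -> Prop) (T : V -> V) : Prop :=
  forall (x y : V) (l : R), 0 <= l <= 1 ->
    le (T (l *: x + (1 - l) *: y)) (l *: T x + (1 - l) *: T y).

Definition bounded_op (T : V -> V) : Prop :=
  forall r : R, 0 < r -> exists M : R, forall x : V, `|x| <= r -> `|T x| <= M.

(* S t is only relevant for t >= 0. *)
Definition convex_C0_semigroup (le : V -> V -> Prop) (S : R -> V -> V) : Prop :=
  [/\ (forall t, 0 <= t -> convex_op le (S t) /\ bounded_op (S t)),
      (forall x, S 0 x = x),
      (forall t s x, 0 <= t -> 0 <= s -> S (t + s) x = S t (S s x)) &
      (forall x, S t x @[t --> 0^'+] --> x)].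

Definition gen_domain (S : R -> V -> V) : set V :=
  [set x | cvg ((h^-1 *: (S h x - x)) @[h --> 0^'+])].

Definition generator (S : R -> V -> V) (x : V) : V :=
  lim ((h^-1 *: (S h x - x)) @[h --> 0^'+]).

End Defs.

(* Main.v *)
Require Import Defs.
From HB Require Import structures.
From mathcomp Require Import all_boot all_order all_algebra.
From mathcomp Require Import all_classical all_reals all_analysis.
From mathcomp Require Import ring lra.
Import Order.TTheory GRing.Theory Num.Theory.
Import numFieldNormedType.Exports.
Import Num.Def.
Local Open Scope classical_set_scope.
Local Open Scope ring_scope.

Section Lat.
Context {R : realType} {V : completeNormedModType R}.
Variables (le : V -> V -> Prop) (join : V -> V -> V).
Hypothesis hBL : BanachLattice le join.

Definition pos (z : V) := join z 0.

Lemma le_addr c {a b} : le a b -> le (a + c) (b + c).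
Proof. exact: (bl_add hBL). Qed.

Lemma le_trans' b {a c} : le a b -> le b c -> le a c.
Proof. exact: (bl_trans hBL). Qed.

Lemma le_add2 {a b c d} : le a b -> le c d -> le (a + c) (b + d).
Proof.
move=> ab cd; apply: (le_trans' (b + c)); first exact: le_addr.
rewrite (addrC b c) (addrC b d); exact: le_addr.
Qed.

Lemma le_subl {a b c} : le a (b + c) -> le (a - b) c.
Proof.
move=> h; have := le_addr (- b) h. by rewrite (addrC b c) addrK.
Qed.

Lemma le_opp {a b c} : le a b -> le (c - b) (c - a).
Proof.
move=> h; have := le_addr (c - a - b) h.
have -> : a + (c - a - b) = c - b by rewrite addrA (addrC a) subrK.
by have -> : b + (c - a - b) = c - a by rewrite addrC subrK.
Qed.

Lemma pos_ge0 z : le 0 (pos z).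
Proof. exact: (bl_join_r hBL). Qed.

Lemma pos_ge z : le z (pos z).
Proof. exact: (bl_join_l hBL). Qed.

Lemma pos_mono {a b} : le a b -> le (pos a) (pos b).
Proof.
move=> ab; apply: (bl_join_least hBL) => //.
- exact: (le_trans' _ ab (pos_ge b)).
- exact: pos_ge0.
Qed.

Lemma lmod_nonneg {a} : le 0 a -> lmod join a = a.
Proof.
move=> a0; have na : le (- a) a.
  apply: (le_trans' 0) => //.
  have := le_addr (- a) a0; by rewrite add0r subrr.
apply: (bl_antisym hBL) => //; last exact: (bl_join_l hBL).
by apply: (bl_join_least hBL) => //; exact: (bl_refl hBL).
Qed.

Lemma norm_mono {a b} : le 0 a -> le a b -> `|a| <= `|b|.
Proof.
move=> a0 ab; apply: (bl_norm hBL) => //.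
by rewrite lmod_nonneg // lmod_nonneg //; exact: (le_trans' _ a0 ab).
Qed.

Lemma lmod_ge0 z : le 0 (lmod join z).
Proof.
set J := lmod join z.
have h1 : le z J by exact: (bl_join_l hBL).
have h2 : le (- z) J by exact: (bl_join_r hBL).
have h3 : le 0 (J + J).
  have := le_add2 h1 h2; rewrite subrr => h.
  exact: h.
have h2i : (0:R) <= 2^-1 by rewrite invr_ge0 ler0n.
have h := bl_scale hBL h2i h3.
have E : J + J = 2%:R *: J by rewrite scaler_nat mulr2n.
by rewrite scaler0 E scalerA mulVf ?pnatr_eq0 // scale1r in h.
Qed.

Lemma norm_pos z : `|pos z| <= `|z|.
Proof.
apply: (bl_norm hBL) => //; rewrite lmod_nonneg; last exact: pos_ge0.
apply: (le_trans' (lmod join z)).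
  apply: (bl_join_least hBL) => //; [exact: (bl_join_l hBL) | exact: lmod_ge0].
exact: (bl_refl hBL).
Qed.

Lemma pos_add a b : le (pos (a + b)) (pos a + pos b).
Proof.
apply: (bl_join_least hBL) => //; first exact: le_add2 (pos_ge a) (pos_ge b).
rewrite -[0](addr0 0); exact: le_add2 (pos_ge0 a) (pos_ge0 b).
Qed.

Lemma ge0_add {a b} : le 0 a -> le 0 b -> le 0 (a + b).
Proof. by move=> ha hb; rewrite -[0](addr0 0); exact: le_add2. Qed.

Lemma norm_split z : `|z| <= `|pos z| + `|pos (- z)|.
Proof.
have P : le 0 (pos z + pos (- z)) by apply: ge0_add; exact: pos_ge0.
apply: (le_trans (y := `|pos z + pos (- z)|)); last exact: ler_normD.
apply: (bl_norm hBL) => //; rewrite (lmod_nonneg P).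
apply: (bl_join_least hBL) => //.
- by have := le_add2 (pos_ge z) (pos_ge0 (- z)); rewrite addr0.
- by have := le_add2 (pos_ge0 z) (pos_ge (- z)); rewrite add0r.
Qed.

Lemma phi_le' B C {A} : le A (B + C) -> `|pos A| <= `|pos B| + `|C|.
Proof.
move=> h.
have h1 : le (pos A) (pos B + pos C).
  exact: le_trans' _ (pos_mono h) (pos_add B C).
apply: (le_trans (norm_mono (pos_ge0 A) h1)).
apply: (le_trans (ler_normD _ _)); rewrite lerD2l; exact: norm_pos.
Qed.

Lemma phi_le {A B C} : le A B -> `|pos (A - C)| <= `|B - C|.
Proof.
move=> h; apply: (le_trans _ (norm_pos _)).
apply: norm_mono; first exact: pos_ge0.
apply: pos_mono; exact: le_addr.
Qed.

Lemma phi_lip a b : `|pos a| <= `|pos b| + `|a - b|.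
Proof. apply: phi_le'; rewrite addrC subrK; exact: (bl_refl hBL). Qed.

Lemma pos0 : pos 0 = 0.
Proof.
apply: (bl_antisym hBL); last exact: pos_ge0.
apply: (bl_join_least hBL); exact: (bl_refl hBL).
Qed.

Lemma phi_add a b : `|pos (a + b)| <= `|pos a| + `|pos b|.
Proof.
apply: le_trans (ler_normD _ _).
apply: norm_mono; [exact: pos_ge0 | exact: pos_add].
Qed.

Lemma phi_sum m (f : nat -> V) :
  `|pos (\sum_(k < m) f k)| <= \sum_(k < m) `|pos (f k)|.
Proof.
elim: m => [|m IH]; first by rewrite !big_ord0 pos0 normr0.
rewrite !big_ord_recr /=.
apply: (le_trans (phi_add _ _)); by rewrite lerD2r.
Qed.

Lemma cvx_up (T : V -> V) a v (h : R) : convex_op le T -> 0 <= h <= 1 ->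
  le (T (a + h *: v) - T a) (h *: (T (a + v) - T a)).
Proof.
move=> cT hh; have := cT (a + v) a h hh.
have -> : h *: (a + v) + (1 - h) *: a = a + h *: v.
  by rewrite scalerDr scalerBl scale1r addrC addrA subrK addrC.
have -> : h *: T (a + v) + (1 - h) *: T a = T a + h *: (T (a + v) - T a).
  by rewrite scalerDr scalerBl scale1r scalerN addrCA.
exact: le_subl.
Qed.

Lemma cvx_down (T : V -> V) a v (h : R) : convex_op le T -> 0 <= h ->
  le (h *: (T a - T (a - v))) (T (a + h *: v) - T a).
Proof.
move=> cT h0.
have h1 : 0 < 1 + h by rewrite ltr_pwDl.
set l := (1 + h)^-1.
have l01 : 0 <= l <= 1.
  rewrite invr_ge0 (ltW h1) /= invf_le1 //; by rewrite lerDl.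
have := cT (a + h *: v) (a - v) l l01.
have E1 : 1 - l = h * l by rewrite /l; field; rewrite lt0r_neq0.
have -> : l *: (a + h *: v) + (1 - l) *: (a - v) = a.
  rewrite E1 scalerDr scalerBr scalerA (mulrC l h) addrACA subrr addr0 -scalerDl.
  by rewrite -E1 addrC subrK scale1r.
move=> H; have := bl_scale hBL (ltW h1) H.
have Hl : (1 + h) * l = 1 by rewrite /l mulfV // lt0r_neq0.
have Hl2 : (1 + h) * (1 - l) = h by rewrite E1 mulrCA Hl mulr1.
rewrite scalerDr !scalerA Hl Hl2 scale1r.
move=> H2; have := le_addr (- (h *: T (a - v)) - T a) H2.
have -> : (1 + h) *: T a + (- (h *: T (a - v)) - T a) = h *: (T a - T (a - v)).
  by rewrite scalerDl scale1r scalerBr (addrC (- (h *: T (a - v)))) addrACA subrr add0r.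
have -> : T (a + h *: v) + h *: T (a - v) + (- (h *: T (a - v)) - T a) = T (a + h *: v) - T a.
  by rewrite -addrA (addrA (h *: _)) subrr add0r.
by [].
Qed.


Lemma cvx_lip_half (T : V -> V) p (r M : R) a b : convex_op le T -> 0 < r ->
  (forall z, `|z - p| <= 2 * r -> `|T z| <= M) ->
  `|a - p| <= r -> `|b - p| <= r ->
  `|pos (T a - T b)| <= 2 * M / r * `|a - b|.
Proof.
move=> cT r0 HM ap bp.
have M0 : 0 <= M.
  apply: le_trans (HM p _); first exact: normr_ge0.
  by rewrite subrr normr0 mulr_ge0 // ltW.
have [->|ab] := eqVneq a b.
  by rewrite subrr pos0 normr0 subrr normr0 mulr0.
set d := `|a - b|.
have d0 : 0 < d by rewrite normr_gt0 subr_eq0.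
set c := a + (r / d) *: (a - b).
set lam := d / (r + d).
have rd0 : 0 < r + d by rewrite addr_gt0.
have Hc : `|c - p| <= 2 * r.
  have -> : c - p = (a - p) + (r / d) *: (a - b) by rewrite /c addrAC.
  apply: le_trans (ler_normD _ _) _.
  rewrite normrZ gtr0_norm ?divr_gt0 // -/d divfK ?lt0r_neq0 //.
  by rewrite mulr2n mulrDl mul1r lerD2r.
have E : b + lam *: (c - b) = a.
  have -> : c - b = (1 + r / d) *: (a - b).
    by rewrite /c scalerDl scale1r addrAC.
  rewrite scalerA.
  have -> : lam * (1 + r / d) = 1.
    by rewrite /lam; field; rewrite !lt0r_neq0.
  by rewrite scale1r addrC subrK.
have lam01 : 0 <= lam <= 1.
  apply/andP; split; first by rewrite /lam divr_ge0 // ltW.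
  by rewrite /lam ler_pdivrMr // mul1r lerDr ltW.
have := cvx_up T b (c - b) lam cT lam01.
rewrite E (addrC b) subrK => H.
have := phi_le (C := 0) H; rewrite !subr0 => H2.
apply: le_trans H2 _.
rewrite normrZ ger0_norm ?(andP lam01).1 //.
apply: (le_trans (y := lam * (M + M))).
  apply: ler_wpM2l; first exact: (andP lam01).1.
  apply: le_trans (ler_normB _ _) _; apply: lerD; apply: HM => //.
  apply: le_trans bp _; rewrite mulr2n mulrDl mul1r lerDr ltW //.
rewrite /lam -mulr2n -mulr_natl.
have h : d / (r + d) <= d / r by rewrite ler_pM2l // lef_pV2 ?posrE // lerDl ltW.
apply: le_trans (ler_wpM2r _ h) _; first by rewrite mulrn_wge0.
have -> : d / r * (M *+ 2) = 2 * 1 * M / r * d.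
  by field; rewrite lt0r_neq0.
by [].
Qed.

Lemma cvx_lip (T : V -> V) p (r M : R) a b : convex_op le T -> 0 < r ->
  (forall z, `|z - p| <= 2 * r -> `|T z| <= M) ->
  `|a - p| <= r -> `|b - p| <= r ->
  `|T a - T b| <= 4 * M / r * `|a - b|.
Proof.
move=> cT r0 HM ap bp.
apply: le_trans (norm_split _) _.
rewrite opprB.
have := cvx_lip_half T p r M a b cT r0 HM ap bp.
have := cvx_lip_half T p r M b a cT r0 HM bp ap.
rewrite distrC => h1 h2.
apply: le_trans (lerD h2 h1) _.
rewrite -mulrDl -mulrDl; apply: ler_wpM2r; first exact: normr_ge0.
rewrite -mulrDl; apply: ler_wpM2r; first by rewrite invr_ge0 ltW.
have M0 : 0 <= M.
  apply: le_trans (HM p _); first exact: normr_ge0.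
  by rewrite subrr normr0 mulr_ge0 // ltW.
lra.
Qed.


Lemma cvx_cont (T : V -> V) : convex_op le T -> bounded_op T -> continuous T.
Proof.
move=> cT bT a.
have [M HM] := bT (`|a| + 2) (ltr_wpDl (normr_ge0 a) (ltr0n _ 2)).
have Hb : forall z, `|z - a| <= 2 * 1 -> `|T z| <= M.
  move=> z za; apply: HM; rewrite mulr1 in za.
  have -> : z = a + (z - a) by rewrite addrC subrK.
  by apply: le_trans (ler_normD _ _) _; rewrite lerD2l.
have M0 : 0 <= M by apply: le_trans (Hb a _); rewrite ?subrr ?normr0 ?mulr1.
apply/cvgrPdist_le => e e0.
apply/nbhs_ballP; exists (minr 1 (e / (4 * M + 1))).
  by rewrite /= lt_min ltr01 divr_gt0 // ltr_wpDl // mulr_ge0.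
move=> t; rewrite -ball_normE /ball_ /= lt_min => /andP[t1 te].
have H0 : `|a - a| <= 1 by rewrite subrr normr0 ler01.
have Ht : `|t - a| <= 1 by rewrite distrC ltW.
have H := cvx_lip T a 1 M a t cT ltr01 Hb H0 Ht.
apply: le_trans H _; rewrite divr1.
have h4 : 0 < 4 * M + 1 by rewrite ltr_wpDl // mulr_ge0.
have := ltW te; rewrite ler_pdivlMr // => te'.
apply: le_trans te'; rewrite mulrC; apply: ler_wpM2l; [exact: normr_ge0 | by rewrite lerDl ler01].
Qed.

Lemma near0P (P : R -> Prop) : (\forall h \near 0^'+, P h) ->
  exists2 d : R, 0 < d & forall h, 0 < h < d -> P h.
Proof.
rewrite /at_right near_withinE => /nbhs_ballP[d d0 H].
exists d => // h /andP[h0 hd]; apply: H => //.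
by rewrite -ball_normE /ball_ /= sub0r normrN gtr0_norm.
Qed.

Lemma near0I (P : R -> Prop) : (exists2 d : R, 0 < d & forall h, 0 < h < d -> P h) ->
  \forall h \near 0^'+, P h.
Proof.
move=> [d d0 H]; rewrite /at_right near_withinE; apply/nbhs_ballP.
exists d => // h; rewrite -ball_normE /ball_ /= sub0r normrN => hd h0.
by apply: H; rewrite h0 /=; rewrite gtr0_norm in hd.
Qed.


Lemma pos_scale (c : R) z : 0 < c -> pos (c *: z) = c *: pos z.
Proof.
move=> c0; apply: (bl_antisym hBL).
- apply: (bl_join_least hBL).
  + exact: (bl_scale hBL (ltW c0) (pos_ge z)).
  + by have := bl_scale hBL (ltW c0) (pos_ge0 z); rewrite scaler0.
- have ci : 0 <= c^-1 by rewrite invr_ge0 ltW.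
  have H : le (pos z) (c^-1 *: pos (c *: z)).
    apply: (bl_join_least hBL).
    + have := bl_scale hBL ci (pos_ge (c *: z)).
      by rewrite scalerA mulVf ?lt0r_neq0 // scale1r.
    + by have := bl_scale hBL ci (pos_ge0 (c *: z)); rewrite scaler0.
  have := bl_scale hBL (ltW c0) H.
  by rewrite scalerA mulfV ?lt0r_neq0 // scale1r.
Qed.

Lemma mid_eq (w b : V) : 2^-1 *: (w + (w - b)) + (1 - 2^-1) *: b = w.
Proof.
have -> : (1 - 2^-1 : R) = 2^-1 by field.
have E : w + w = (2%:R : R) *: w by rewrite scaler_nat mulr2n.
rewrite -scalerDr addrA subrK E scalerA.
by rewrite mulVf ?pnatr_eq0 // scale1r.
Qed.

Lemma half_norm (X : V) : `|(2^-1 : R) *: X| <= `|X|.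
Proof.
rewrite normrZ ger0_norm ?invr_ge0 ?ler0n //.
rewrite ler_pdivrMl ?ltr0n // ler_peMl ?ler1n //.
Qed.

Lemma le_swap A B C : le A (B + C) -> le (- C) (B - A).
Proof.
move=> h; have := le_addr (- A - C) h.
have -> : A + (- A - C) = - C by rewrite addrA subrr add0r.
by have -> : B + C + (- A - C) = B - A by rewrite addrACA subrr addr0.
Qed.

Lemma inv_small (e : R) : 0 < e -> exists N, forall n, (N <= n)%N -> n.+1%:R^-1 < e.
Proof.
move=> e0; exists (truncn e^-1) => n hn.
rewrite -ltf_pV2 ?posrE ?invr_gt0 // invrK.
apply: lt_le_trans (truncnS_gt _) _; by rewrite ler_nat.
Qed.

Lemma nat_big (M : R) : exists N, forall n, (N <= n)%N -> M < n%:R.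
Proof.
exists (truncn M).+1 => n hn.
apply: lt_le_trans (truncnS_gt _) _; by rewrite ler_nat.
Qed.


Lemma subp (T : nat -> V -> V) :
  (forall n, convex_op le (T n)) -> (forall n, continuous (T n)) ->
  (forall z, exists M N, forall n, (N <= n)%N -> `|T n z| <= M) ->
  forall p, exists r M N, 0 < r /\
    forall n z, (N <= n)%N -> `|z - p| <= r -> `|T n z| <= M.
Proof.
move=> cT contT bdd p.
pose O k := [set z : V | exists n, (k <= n)%N /\ k%:R < `|T n z|].
have Oopen k : open (O k).
  rewrite openE => z [n [kn Hn]].
  have := contT n z; move/cvgrPdist_lt => /(_ (`|T n z| - k%:R)).
  rewrite subr_gt0 => /(_ Hn).
  apply: filterS => w Hw; exists n; split => //.
  have := ler_normD (T n z - T n w) (T n w); rewrite subrK => h.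
  lra.
have noint z : exists k, ~ O k z.
  have [M [N HN]] := bdd z; have [K HK] := nat_big M.
  exists (maxn N K) => -[n [kn Hn]].
  have Nn : (N <= n)%N by apply: leq_trans (leq_maxl N K) kn.
  have Kn : M < (maxn N K)%:R := HK _ (leq_maxr N K).
  have := HN n Nn => h.
  by have := lt_le_trans (lt_trans Kn Hn) h; rewrite ltxx.
have [k nd] : exists k, ~ dense (O k).
  apply: contrapT => H.
  have dk : forall k, open (O k) /\ dense (O k).
    by move=> k; split; [exact: Oopen | apply: contrapT => nd; apply: H; exists k].
  have [x [_ Hx]] := Baire dk (ex_intro _ 0 I) openT.
  have [k0 nk] := noint x; apply: nk; exact: Hx.
have [U0 [[x0 ox] U0k]] := denseNE nd.
have /nbhs_ballP[r0 r00 Hb] : nbhs x0 U0 by exact: open_nbhs_nbhs.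
have Hk : forall z, `|x0 - z| < r0 -> forall n, (k <= n)%N -> `|T n z| <= k%:R.
  move=> z zr n kn; rewrite leNgt; apply/negP => hlt.
  have : (U0 `&` O k) z.
    by split; [apply: Hb; rewrite -ball_normE /ball_ /= | exists n].
  by rewrite U0k.
set b0 := p + (p - x0).
have [Mb [Nb HNb]] := bdd b0.
have [Mp [Np HNp]] := bdd p.
have E2 : (1 - 2^-1 : R) = 2^-1 by field.
have r4 : 0 < r0 / 4 by rewrite divr_gt0.
have UB : forall n w, (maxn k Nb <= n)%N -> `|w - p| <= r0 / 4 ->
    `|pos (T n w)| <= k%:R + Mb.
  move=> n w hn wp.
  have kn : (k <= n)%N by apply: leq_trans (leq_maxl _ _) hn.
  have Nbn : (Nb <= n)%N by apply: leq_trans (leq_maxr _ _) hn.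
  set a := w + (w - b0).
  have e1 : b0 + x0 = p + p by rewrite /b0 -addrA subrK.
  have e2 : a - x0 = (w - p) + (w - p).
    by rewrite /a addrA -[_ - b0 - x0]addrA -opprD e1 opprD addrACA.
  have ha : `|x0 - a| < r0.
    rewrite distrC e2; apply: le_lt_trans (ler_normD _ _) _.
    have : `|w - p| + `|w - p| <= r0 / 4 + r0 / 4 by apply: lerD.
    move=> h; apply: le_lt_trans h _; lra.
  have := cT n a b0 (2^-1).
  rewrite mid_eq invr_ge0 ler0n invf_le1 ?ltr0n // ler1n => /(_ isT) H.
  have := phi_le' _ _ H; rewrite E2 => H1.
  apply: le_trans H1 _; apply: lerD.
  - apply: le_trans (norm_pos _) _; apply: le_trans (half_norm _) _.
    exact: Hk.
  - by apply: le_trans (half_norm _) _; apply: HNb.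
exists (r0 / 4), ((k%:R + Mb) + ((k%:R + Mb) + 2 * Mp)), (maxn k (maxn Nb Np)).
split => // n w hn wp.
have hn1 : (maxn k Nb <= n)%N.
  by rewrite geq_max; rewrite !geq_max in hn; case/and3P: hn => -> -> _.
have Npn : (Np <= n)%N by rewrite !geq_max in hn; case/and3P: hn.
apply: le_trans (norm_split _) _.
apply: lerD; first exact: UB.
set x := p + (p - w).
have hx : `|x - p| <= r0 / 4 by rewrite /x [p + _]addrC addrK distrC.
have := cT n x w (2^-1).
rewrite mid_eq invr_ge0 ler0n invf_le1 ?ltr0n // ler1n => /(_ isT) H.
have := le_swap _ _ _ H; rewrite E2 -scalerN => H1.
have := phi_le' _ _ H1; rewrite !pos_scale ?invr_gt0 ?ltr0n //.
rewrite !normrZ normrN ger0_norm ?invr_ge0 ?ler0n // => H2.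
have := UB n x hn1 hx => H3.
have := HNp n Npn => H4.
have H5 : 0 <= `|pos (- T n w)| by [].
lra.
Qed.


Lemma LB (S : R -> V -> V) : convex_C0_semigroup le S -> forall p,
  exists t0 r M, [/\ 0 < t0, 0 < r &
    forall s z, 0 <= s <= t0 -> `|z - p| <= r -> `|S s z| <= M].
Proof.
move=> hS p; case: (hS) => hcb hS0 _ hC0.
apply: contrapT => Hn.
have H1 : forall n : nat, exists sz : R * V, [/\ 0 <= sz.1 <= n.+1%:R^-1,
    `|sz.2 - p| <= n.+1%:R^-1 & n%:R < `|S sz.1 sz.2|].
  move=> n; apply: contrapT => Hn2; apply: Hn.
  exists n.+1%:R^-1, n.+1%:R^-1, n%:R; split => //.
  move=> s z hs hz; rewrite leNgt; apply/negP => hlt; apply: Hn2.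
  by exists (s, z); split.
have [f Hf] := choice H1.
pose T n := S (f n).1.
have hf0 n : 0 <= (f n).1 by have [/andP[h0 _] _ _] := Hf n.
have cT n : convex_op le (T n) by exact: (hcb _ (hf0 n)).1.
have contT n : continuous (T n) := cvx_cont (T n) (cT n) (hcb _ (hf0 n)).2.
have bdd : forall z, exists M N, forall n, (N <= n)%N -> `|T n z| <= M.
  move=> z; have /cvgrPdist_le /(_ 1 ltr01) /near0P [d d0 Hd] := hC0 z.
  have [N HN] := inv_small _ d0.
  exists (`|z| + 1), N => n hn.
  have [/andP[s0 s1] _ _] := Hf n.
  rewrite /T; move: s0 s1; set s := (f n).1 => s0 s1.
  case: (eqVneq s 0) => [->|sn0]; first by rewrite hS0 lerDl.
  have h : `|z - S s z| <= 1.
    by apply: Hd; rewrite lt0r sn0 s0 /=; apply: le_lt_trans s1 (HN _ hn).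
  have := ler_normD (S s z - z) z; rewrite subrK => h2; rewrite distrC in h; lra.
have [r [M [N [r0 HM]]]] := subp T cT contT bdd p.
have [N1 HN1] := inv_small _ r0.
have [N2 HN2] := nat_big M.
pose n := maxn N (maxn N1 N2).
have [_ hz hS'] := Hf n.
have h1 : (N <= n)%N by rewrite /n leq_maxl.
have h2 : (N1 <= n)%N by rewrite /n leq_max (leq_maxl N1 N2) orbT.
have h3 : (N2 <= n)%N by rewrite /n leq_max (leq_maxr N1 N2) orbT.
have := HM n (f n).2 h1 (le_trans hz (ltW (HN1 n h2))).
have := HN2 n h3.
rewrite /T => a b; lra.
Qed.

Lemma EQ (S : R -> V -> V) : convex_C0_semigroup le S -> forall p,
  exists t0 r L, [/\ 0 < t0, 0 < r, 0 <= L &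
    forall s a, 0 <= s <= t0 -> `|a - p| <= r -> `|S s a - S s p| <= L * `|a - p|].
Proof.
move=> hS p; have [t0 [r [M [t00 r0 HM]]]] := LB S hS p.
case: (hS) => hcb _ _ _.
have M0 : 0 <= M.
  have h00 : (0:R) <= 0 <= t0 by rewrite lexx ltW.
  have hp0 : `|p - p| <= r by rewrite subrr normr0 ltW.
  exact: le_trans (HM 0 p h00 hp0).
exists t0, (r / 2), (4 * M / (r / 2)); split => //.
- by rewrite divr_gt0.
- by rewrite divr_ge0 ?mulr_ge0 ?divr_ge0 // ltW.
move=> s a hs ha.
have hs0 : 0 <= s by case/andP: hs.
apply: (cvx_lip (S s) p (r / 2) M a p (hcb s hs0).1) => //.
- by rewrite divr_gt0.
- move=> z hz; apply: HM => //; move: hz; rewrite mulrC divfK // lt0r_neq0 // ltr0n.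

- by rewrite subrr normr0 divr_ge0 // ltW.
Qed.


Lemma tri3 (A B C D y : V) : `|A - B - y| <= `|A - C| + `|B - D| + `|C - D - y|.
Proof.
have -> : A - B - y = (A - C) - (B - D) + ((C - D) - y).
  by rewrite !opprB !addrA (addrAC A (- C)) (addrAC (A + D) (- C)) subrK (addrAC A D) addrK.
apply: le_trans (ler_normD _ _) _; rewrite lerD2r; exact: ler_normB.
Qed.

Lemma tri2 (C D x y : V) : `|C - D - y| <= `|C - (x + y)| + `|D - x|.
Proof.
have -> : C - D - y = (C - (x + y)) - (D - x).
  by rewrite opprB opprD !addrA (addrAC (C - x) (- y)) subrK addrAC.
exact: ler_normB.
Qed.

Lemma term_up (T : V -> V) a w x y (h : R) : convex_op le T -> 0 <= h <= 1 ->
  `|pos (T (a + h *: w) - T a - h *: y)| <=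
  h * (`|T (a + w) - T (x + y)| + `|T a - T x| + (`|T (x + y) - (x + y)| + `|T x - x|)).
Proof.
move=> cT hh; have h0 : 0 <= h by case/andP: hh.
have := phi_le (C := h *: y) (cvx_up T a w h cT hh).
rewrite -scalerBr normrZ ger0_norm // => H.
apply: le_trans H _; apply: ler_wpM2l => //.
apply: le_trans (tri3 _ _ (T (x + y)) (T x) _) _.
by rewrite lerD2l; exact: tri2.
Qed.

Lemma term_down (T : V -> V) a w x y (h : R) : convex_op le T -> 0 <= h ->
  `|pos (h *: y - (T (a + h *: w) - T a))| <=
  h * (`|T a - T x| + `|T (a - w) - T (x - y)| + (`|T x - x| + `|T (x - y) - (x - y)|)).
Proof.
move=> cT h0.
have H0 := le_opp (c := h *: y) (cvx_down T a w h cT h0).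
have := phi_le (C := 0) H0; rewrite !subr0 -scalerBr normrZ ger0_norm // => H.
apply: le_trans H _; apply: ler_wpM2l => //.
rewrite -normrN opprB.
apply: le_trans (tri3 _ _ (T x) (T (x - y)) _) _.
rewrite lerD2l.
have := tri2 (T x) (T (x - y)) (x - y) y; rewrite subrK; apply: le_trans.
by rewrite addrC.
Qed.


Lemma sum_est (S : R -> V -> V) (un w x y : V) (h eta : R) (m : nat) :
  convex_C0_semigroup le S -> 0 < h <= 1 -> S h un = un + h *: w ->
  (forall s, 0 <= s < m%:R * h ->
     `|S s (un + w) - S s (x + y)| + `|S s un - S s x| +
       (`|S s (x + y) - (x + y)| + `|S s x - x|) <= 4 * eta /\
     `|S s un - S s x| + `|S s (un - w) - S s (x - y)| +
       (`|S s x - x| + `|S s (x - y) - (x - y)|) <= 4 * eta) ->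
  `|pos (S (m%:R * h) un - un - (m%:R * h) *: y)| <= m%:R * h * (4 * eta) /\
  `|pos (- (S (m%:R * h) un - un - (m%:R * h) *: y))| <= m%:R * h * (4 * eta).
Proof.
move=> hS /andP[h0 h1] Hw Hb.
case: (hS) => hcb hS0 hSadd _.
pose F k := S (k%:R * h) un.
have kh0 k : 0 <= k%:R * h by rewrite mulr_ge0 // ltW.
have Fs k : F k.+1 = S (k%:R * h) (un + h *: w).
  by rewrite /F -Hw -hSadd ?kh0 ?ltW // -natr1 mulrDl mul1r.
have tele : S (m%:R * h) un - un - (m%:R * h) *: y =
    \sum_(k < m) (F k.+1 - F k - h *: y).
  rewrite sumrB sumr_const card_ord scalerMnl.
  have -> : h *+ m = m%:R * h by rewrite mulr_natl.
  rewrite -(big_mkord xpredT (fun k => F k.+1 - F k)) telescope_sumr //.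
  by rewrite /F mul0r hS0.
have Hk : forall k : 'I_m, 0 <= (k : nat)%:R * h < m%:R * h.
  move=> k; rewrite kh0 /= ltr_pM2r // ltr_nat; exact: ltn_ord.
have hh : 0 <= h <= 1 by rewrite ltW.
split.
- rewrite tele; apply: le_trans (phi_sum m (fun k => F k.+1 - F k - h *: y)) _.
  apply: (le_trans (y := \sum_(k < m) (h * (4 * eta)))); last first.
    by rewrite sumr_const card_ord -(mulr_natl (h * (4 * eta)) m) mulrA.
  apply: ler_sum => k _; rewrite Fs.
  apply: le_trans (term_up _ _ _ x y _ (hcb _ (kh0 k)).1 hh) _.
  by apply: ler_wpM2l; [exact: ltW | exact: (Hb _ (Hk k)).1].
- rewrite tele -sumrN; apply: le_trans (phi_sum m (fun k => - (F k.+1 - F k - h *: y))) _.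
  apply: (le_trans (y := \sum_(k < m) (h * (4 * eta)))); last first.
    by rewrite sumr_const card_ord -(mulr_natl (h * (4 * eta)) m) mulrA.
  apply: ler_sum => k _; rewrite opprB Fs.
  apply: le_trans (term_down _ _ _ x y _ (hcb _ (kh0 k)).1 (ltW h0)) _.
  by apply: ler_wpM2l; [exact: ltW | exact: (Hb _ (Hk k)).2].
Qed.


Lemma nD2 (a b c d : V) : `|a + b - (c + d)| <= `|a - c| + `|b - d|.
Proof. by rewrite opprD addrACA; exact: ler_normD. Qed.

Lemma nB2 (a b c d : V) : `|a - b - (c - d)| <= `|a - c| + `|b - d|.
Proof.
have -> : a - b - (c - d) = (a - c) - (b - d).
  by rewrite !opprB addrACA [RHS]addrACA (addrC (- b)).
exact: ler_normB.
Qed.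

Lemma ar2 (a b c : R) : a <= c -> b <= c -> a + b <= 2 * c.
Proof. lra. Qed.

Lemma ar42 (a b x e : R) : a <= x * (4 * e) -> b <= 2 * (x * e) -> a + b <= 6 * (x * e).
Proof. nra. Qed.

Lemma ar66 (a b x e : R) : a <= 6 * (x * e) -> b <= 6 * (x * e) -> a + b <= x * (12 * e).
Proof. nra. Qed.

Lemma closed_main (S : R -> V -> V) (u : nat -> V) (x y : V) :
  convex_C0_semigroup le S ->
  (forall n, gen_domain S (u n)) -> u @ \oo --> x ->
  (fun n => generator S (u n)) @ \oo --> y ->
  gen_domain S x /\ generator S x = y.
Proof.
move=> hS hD hu hA.
suff Hc : (fun h => h^-1 *: (S h x - x)) @ 0^'+ --> y.
  by split; [apply/cvg_ex; exists y | exact: cvg_lim].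
case: (hS) => hcb hS0 hSadd hC0.
have [t1 [r1 [L1 [t10 r10 L10 H1]]]] := EQ S hS x.
have [t2 [r2 [L2 [t20 r20 L20 H2]]]] := EQ S hS (x + y).
have [t3 [r3 [L3 [t30 r30 L30 H3]]]] := EQ S hS (x - y).
apply/cvgrPdist_le => e e0.
pose eta := e / 12.
have eta0 : 0 < eta by rewrite divr_gt0.
have e12 : e = 12 * eta by rewrite /eta mulrC divfK // pnatr_eq0.
have cont0 q : exists2 d : R, 0 < d & forall s, 0 <= s < d -> `|S s q - q| <= eta.
  have /cvgrPdist_le /(_ eta eta0) /near0P [d d0 Hd] := hC0 q.
  exists d => // s /andP[s0 sd]; case: (eqVneq s 0) => [->|sn0].
    by rewrite hS0 subrr normr0 ltW.
  by rewrite distrC; apply: Hd; rewrite lt0r sn0 s0.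
have [d1 d10 Hd1] := cont0 x.
have [d2 d20 Hd2] := cont0 (x + y).
have [d3 d30 Hd3] := cont0 (x - y).
pose T0 := minr (minr t1 (minr t2 t3)) (minr d1 (minr d2 d3)).
have T00 : 0 < T0 by rewrite !lt_min t10 t20 t30 d10 d20 d30.
apply: near0I; exists T0 => // t /andP[t0 tT].
have [[ht1 ht2 ht3] [hd1 hd2 hd3]] : [/\ t < t1, t < t2 & t < t3] /\ [/\ t < d1, t < d2 & t < d3].
  by move: tT; rewrite !lt_min => /andP[/andP[-> /andP[-> ->]] /andP[-> /andP[-> ->]]].
pose Ls := L1 + L2 + L3 + 1.
have Ls0 : 0 < Ls by rewrite /Ls ltr_wpDl // !addr_ge0.
pose xi := minr (minr r1 (minr r2 r3)) (eta / Ls) / 3.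
have xi0 : 0 < xi by rewrite /xi divr_gt0 // !lt_min r10 r20 r30 divr_gt0.
have Hxi : forall z : V, `|z| <= 3 * xi ->
    [/\ `|z| <= r1, `|z| <= r2 & `|z| <= r3] /\
    [/\ L1 * `|z| <= eta, L2 * `|z| <= eta & L3 * `|z| <= eta].
  move=> z; rewrite /xi mulrC divfK ?pnatr_eq0 // !le_min => /andP[/andP[z1 /andP[z2 z3]] zL].
  have hL : forall L, 0 <= L -> L <= Ls -> L * `|z| <= eta.
    move=> L L0 LL; apply: le_trans (ler_wpM2l L0 zL) _.
    rewrite mulrA ler_pdivrMr // mulrC ler_wpM2l //; exact: ltW.
  by split; split => //; apply: hL => //; rewrite /Ls; lra.
pose epsu := minr xi (t * eta / (L1 + 1)).
have epsu0 : 0 < epsu by rewrite lt_min xi0 !divr_gt0 ?mulr_gt0 // ltr_wpDl.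
have [n [hn1 hn2]] := filter_ex (filterI
   ((proj1 (cvgrPdist_le _ _) hu) epsu epsu0) ((proj1 (cvgrPdist_le _ _) hA) xi xi0)).
move: hn1 hn2; set un := u n; set An := generator S (u n) => hn1 hn2.
have hdn : (fun h => h^-1 *: (S h un - un)) @ 0^'+ --> An := hD n.
have /cvgrPdist_le /(_ xi xi0) /near0P [dn dn0 Hdn] := hdn.
pose dl := minr dn 1.
have dl0 : 0 < dl by rewrite lt_min dn0 ltr01.
have [N HN] := nat_big (t / dl).
pose m := N.+1.
have hm : t / dl < m%:R := HN m (leqnSn N).
have m0 : 0 < m%:R :> R by rewrite ltr0n.
pose h := t / m%:R.
have h0 : 0 < h by rewrite divr_gt0.
have hdl : h < dl by rewrite /h ltr_pdivrMr // mulrC -ltr_pdivrMr.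
have [hhdn h1] : h < dn /\ h < 1 by move: hdl; rewrite lt_min => /andP[-> ->].
pose w := h^-1 *: (S h un - un).
have Hw : S h un = un + h *: w.
  by rewrite /w scalerA mulfV ?gt_eqF // scale1r addrC subrK.
have hwA : `|An - w| <= xi by apply: Hdn; rewrite h0.
have mh : m%:R * h = t by rewrite /h mulrCA mulfV ?mulr1 // gt_eqF.
have hux : `|un - x| <= xi by rewrite distrC; apply: le_trans hn1 _; rewrite ge_min lexx.
have hux2 : `|un - x| <= t * eta / (L1 + 1).
  by rewrite distrC; apply: le_trans hn1 _; rewrite ge_min lexx orbT.
have hwy : `|w - y| <= 2 * xi.
  apply: le_trans (ler_distD An _ _) _.
  rewrite mulr2n mulrDl mul1r; apply: lerD; by rewrite distrC.
have hp : `|un + w - (x + y)| <= 3 * xi.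
  apply: le_trans (nD2 _ _ _ _) _.
  have : `|un - x| + `|w - y| <= xi + 2 * xi by apply: lerD.
  move=> H; apply: le_trans H _; lra.
have hm' : `|un - w - (x - y)| <= 3 * xi.
  apply: le_trans (nB2 _ _ _ _) _.
  have : `|un - x| + `|w - y| <= xi + 2 * xi by apply: lerD.
  move=> H; apply: le_trans H _; lra.
have hux3 : `|un - x| <= 3 * xi by apply: le_trans hux _; lra.
have [[p1 p2 p3] [q1 q2 q3]] := Hxi _ hp.
have [[p1' p2' p3'] [q1' q2' q3']] := Hxi _ hm'.
have [[p1'' p2'' p3''] [q1'' q2'' q3'']] := Hxi _ hux3.
have Hb : forall s, 0 <= s < m%:R * h ->
     `|S s (un + w) - S s (x + y)| + `|S s un - S s x| +
       (`|S s (x + y) - (x + y)| + `|S s x - x|) <= 4 * eta /\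
     `|S s un - S s x| + `|S s (un - w) - S s (x - y)| +
       (`|S s x - x| + `|S s (x - y) - (x - y)|) <= 4 * eta.
  move=> s /andP[s0 st]; rewrite mh in st.
  have hs1 : 0 <= s <= t1 by rewrite s0 ltW // (lt_trans st ht1).
  have hs2 : 0 <= s <= t2 by rewrite s0 ltW // (lt_trans st ht2).
  have hs3 : 0 <= s <= t3 by rewrite s0 ltW // (lt_trans st ht3).
  have e1 := le_trans (H2 s (un + w) hs2 p2) q2.
  have e2 := le_trans (H1 s un hs1 p1'') q1''.
  have e5 := le_trans (H3 s (un - w) hs3 p3') q3'.
  have e3 : `|S s (x + y) - (x + y)| <= eta by apply: Hd2; rewrite s0 (lt_trans st hd2).
  have e4 : `|S s x - x| <= eta by apply: Hd1; rewrite s0 (lt_trans st hd1).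
  have e6 : `|S s (x - y) - (x - y)| <= eta by apply: Hd3; rewrite s0 (lt_trans st hd3).
  split; lra.
have h01 : 0 < h <= 1 by rewrite h0 ltW.
have [Hup Hdown] := sum_est S un w x y h eta m hS h01 Hw Hb.
rewrite mh in Hup Hdown.
set P := S t x - x - t *: y.
set Q := S t un - un - t *: y.
have hPQ : `|P - Q| <= 2 * (t * eta).
  have -> : P - Q = (S t x - x) - (S t un - un).
    by rewrite /P /Q opprB addrA subrK.
  apply: le_trans (nB2 _ _ _ _) _.
  have ht1' : 0 <= t <= t1 by rewrite ltW // ltW.
  have a1 := H1 t un ht1' p1''.
  have te0 : 0 <= t * eta by rewrite mulr_ge0 // ltW.
  have a2 : L1 * `|un - x| <= t * eta.
    apply: le_trans (ler_wpM2l L10 hux2) _.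
    rewrite mulrA ler_pdivrMr ?ltr_wpDl // mulrC.
    by apply: ler_wpM2l => //; rewrite lerDl ler01.
  have a3 : `|un - x| <= t * eta.
    apply: le_trans hux2 _; rewrite ler_pdivrMr ?ltr_wpDl //.
    by rewrite ler_peMr // lerDr.
  rewrite distrC (distrC x); exact: ar2 _ _ _ (le_trans a1 a2) a3.
have hP1 : `|pos P| <= 6 * (t * eta).
  exact: le_trans (phi_lip P Q) (ar42 _ _ _ _ Hup hPQ).
have hP2 : `|pos (- P)| <= 6 * (t * eta).
  apply: le_trans (phi_lip (- P) (- Q)) _.
  have hPQ' : `|- P - - Q| <= 2 * (t * eta) by rewrite -opprD normrN.
  exact: ar42 _ _ _ _ Hdown hPQ'.
have hP : `|P| <= t * e.
  by rewrite e12; exact: le_trans (norm_split P) (ar66 _ _ _ _ hP1 hP2).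
have E : t^-1 *: P = t^-1 *: (S t x - x) - y.
  by rewrite /P scalerBr scalerA mulVf ?gt_eqF // scale1r.
have -> : y - t^-1 *: (S t x - x) = - (t^-1 *: P) by rewrite E opprB.
rewrite normrN normrZ gtr0_norm ?invr_gt0 // mulrC ler_pdivrMr //.
by rewrite mulrC.
Qed.



End Lat.

Theorem proposition3p4 (R : realType) (V : completeNormedModType R)
  (le : V -> V -> Prop) (join : V -> V -> V) (S : R -> V -> V)
  (hBL : BanachLattice le join) (hOC : order_continuous_norm le)
  (hS : convex_C0_semigroup le S)
  (u : nat -> V) (x y : V) :
  (forall n, gen_domain S (u n)) ->
  u @ \oo --> x ->
  (fun n => generator S (u n)) @ \oo --> y ->
  gen_domain S x /\ generator S x = y.
Proof.
move=> hD hu hA.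
exact: (@closed_main R V le join hBL S u x y hS hD hu hA).
Qed.
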